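(* Let $Z$ be a densely defined closed linear operator in a complex separable Hilbert space $\mathcal{H}$ such that $\operatorname{Dom}(Z)\subset\operatorname{Dom}(Z^* )$, and let $\lambda$ be a boundary eigenvalue of $Z$. Then $$\ker(\lambda-Z)\subset\ker(\overline{\lambda}-Z^* ),$$ i.e. if $f\in\operatorname{Dom}(Z)$ and $Zf=\lambda f$, then $Z^*f=\overline{\lambda}f$. If moreover $\operatorname{Dom}(Z)=\operatorname{Dom}(Z^* )$, then $\ker(\lambda-Z)=\ker(\overline{\lambda}-Z^* )$, i.e. $\lambda$ is a normal eigenvalue of $Z$.
   Context: The numerical range of an operator $Z$ in a Hilbert space $(\mathcal{H},\langle\cdot,\cdot\rangle)$ is $\operatorname{Num}(Z)=\{\langle Zf,f\rangle: f\in\operatorname{Dom}(Z),\ \|f\|=1\}$; it is a convex subset of $\mathbb{C}$. A boundary eigenvalue of $Z$ is an eigenvalue of $Z$ that lies in the topological boundary $\partial(\operatorname{Num}(Z))$ of the numerical range. An eigenvalue $\lambda$ of $Z$ is called normal if $\ker(\lambda-Z)=\ker(\overline{\lambda}-Z^* )$. *)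

(* Defs.v *)
From Stdlib Require Import Reals.
Open Scope R_scope.

Definition Cplx : Type := (R * R)%type.
Definition Re (z : Cplx) : R := fst z.
Definition Im (z : Cplx) : R := snd z.
Definition RtoC (x : R) : Cplx := (x, 0).
Definition C0 : Cplx := (0, 0).
Definition C1 : Cplx := (1, 0).
Definition Cadd (z w : Cplx) : Cplx := (Re z + Re w, Im z + Im w).
Definition Copp (z : Cplx) : Cplx := (- Re z, - Im z).
Definition Csub (z w : Cplx) : Cplx := Cadd z (Copp w).
Definition Cmul (z w : Cplx) : Cplx :=
  (Re z * Re w - Im z * Im w, Re z * Im w + Im z * Re w).
Definition Cconj (z : Cplx) : Cplx := (Re z, - Im z).
Definition Cmod (z : Cplx) : R := sqrt (Re z * Re z + Im z * Im z).

Definition boundaryC (S : Cplx -> Prop) (z : Cplx) : Prop :=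
  forall eps : R, 0 < eps ->
    (exists w, S w /\ Cmod (Csub w z) < eps) /\
    (exists w, ~ S w /\ Cmod (Csub w z) < eps).

Record ComplexHilbertSpace : Type := MkHilbert {
  hcar :> Type;
  hzero : hcar;
  hadd : hcar -> hcar -> hcar;
  hopp : hcar -> hcar;
  hscal : Cplx -> hcar -> hcar;
  hinner : hcar -> hcar -> Cplx;   (* linear in the first, antilinear in the second argument *)
  hadd_assoc : forall x y z, hadd x (hadd y z) = hadd (hadd x y) z;
  hadd_comm : forall x y, hadd x y = hadd y x;
  hadd_0 : forall x, hadd x hzero = x;
  hadd_opp : forall x, hadd x (hopp x) = hzero;
  hscal_1 : forall x, hscal C1 x = x;
  hscal_assoc : forall a b x, hscal a (hscal b x) = hscal (Cmul a b) x;
  hscal_addv : forall a x y, hscal a (hadd x y) = hadd (hscal a x) (hscal a y);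
  hscal_adds : forall a b x, hscal (Cadd a b) x = hadd (hscal a x) (hscal b x);
  hinner_add : forall x y z, hinner (hadd x y) z = Cadd (hinner x z) (hinner y z);
  hinner_scal : forall a x y, hinner (hscal a x) y = Cmul a (hinner x y);
  hinner_conj : forall x y, hinner y x = Cconj (hinner x y);
  hinner_pos : forall x, Im (hinner x x) = 0 /\ 0 <= Re (hinner x x);
  hinner_def : forall x, hinner x x = C0 -> x = hzero;
  hcomplete : forall u : nat -> hcar,
    (forall eps, 0 < eps -> exists N, forall n m, (N <= n)%nat -> (N <= m)%nat ->
        sqrt (Re (hinner (hadd (u n) (hopp (u m))) (hadd (u n) (hopp (u m))))) < eps) ->
    exists l, forall eps, 0 < eps -> exists N, forall n, (N <= n)%nat ->
        sqrt (Re (hinner (hadd (u n) (hopp l)) (hadd (u n) (hopp l)))) < eps;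
  hseparable : exists d : nat -> hcar, forall x eps, 0 < eps -> exists n,
        sqrt (Re (hinner (hadd x (hopp (d n))) (hadd x (hopp (d n))))) < eps
}.

Arguments hzero {c}.
Arguments hadd {c}.
Arguments hopp {c}.
Arguments hscal {c}.
Arguments hinner {c}.

Section Ops.
Variable H : ComplexHilbertSpace.

Definition hsub (x y : H) : H := hadd x (hopp y).
Definition hnorm (x : H) : R := sqrt (Re (hinner x x)).

Definition hconverges (u : nat -> H) (l : H) : Prop :=
  forall eps, 0 < eps -> exists N, forall n, (N <= n)%nat -> hnorm (hsub (u n) l) < eps.

(** A (possibly unbounded) operator is a domain predicate [D] together with
    a map [Z] whose values matter only on [D]. *)
Definition is_linear_operator (D : H -> Prop) (Z : H -> H) : Prop :=
  D hzero /\
  (forall x y, D x -> D y -> D (hadd x y) /\ Z (hadd x y) = hadd (Z x) (Z y)) /\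
  (forall a x, D x -> D (hscal a x) /\ Z (hscal a x) = hscal a (Z x)).

Definition densely_defined (D : H -> Prop) : Prop :=
  forall x eps, 0 < eps -> exists y, D y /\ hnorm (hsub x y) < eps.

Definition closed_operator (D : H -> Prop) (Z : H -> H) : Prop :=
  forall (u : nat -> H) (x y : H),
    (forall n, D (u n)) -> hconverges u x -> hconverges (fun n => Z (u n)) y ->
    D x /\ Z x = y.

Definition adjoint_graph (D : H -> Prop) (Z : H -> H) (g h : H) : Prop :=
  forall f, D f -> hinner (Z f) g = hinner f h.

Definition adjoint_domain (D : H -> Prop) (Z : H -> H) (g : H) : Prop :=
  exists h, adjoint_graph D Z g h.

Definition numerical_range (D : H -> Prop) (Z : H -> H) (z : Cplx) : Prop :=
  exists f, D f /\ hnorm f = 1 /\ hinner (Z f) f = z.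

Definition is_eigenvalue (D : H -> Prop) (Z : H -> H) (lam : Cplx) : Prop :=
  exists f, D f /\ f <> hzero /\ Z f = hscal lam f.

Definition boundary_eigenvalue (D : H -> Prop) (Z : H -> H) (lam : Cplx) : Prop :=
  is_eigenvalue D Z lam /\ boundaryC (numerical_range D Z) lam.

Definition ker_Z (D : H -> Prop) (Z : H -> H) (lam : Cplx) (f : H) : Prop :=
  D f /\ Z f = hscal lam f.

Definition ker_Zadj (D : H -> Prop) (Z : H -> H) (lam : Cplx) (f : H) : Prop :=
  adjoint_graph D Z f (hscal (Cconj lam) f).

End Ops.

(* Main.v *)
Require Import Defs.
From Stdlib Require Import Reals Lra Psatz Classical.
Open Scope R_scope.

Lemma Ceq (z w : Cplx) : Re z = Re w -> Im z = Im w -> z = w.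
Proof. destruct z, w; simpl; intros; subst; reflexivity. Qed.

Ltac cunf := unfold Cadd, Csub, Copp, Cmul, Cconj, RtoC, C0, Defs.C1, Cmod, Re, Im in *; simpl in *.
Ltac cring := apply Ceq; cunf; ring.

Lemma solve_eps (a z E : Cplx) :
  0 < Re a*Re a + Im a*Im a ->
  (Re z*Re z+Im z*Im z)*(Re E*Re E+Im E*Im E)*16 <= (Re a*Re a + Im a*Im a)*(Re a*Re a + Im a*Im a) ->
  exists e : Cplx, Cadd (Cmul e a) (Cmul (RtoC (Re e*Re e + Im e*Im e)) E) = z.
Proof.
  destruct a as [a1 a2], z as [z1 z2], E as [e1 e2]; cunf.
  set (b := a1*a1+a2*a2). set (Z := z1*z1+z2*z2). set (K := e1*e1+e2*e2).
  intros Hb HZK.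
  set (P := z1*e1+z2*e2).
  assert (HP : P*P <= Z*K) by (unfold P, Z, K; pose proof (pow2_ge_0 (z1*e2-z2*e1)); nra).
  assert (HZ : 0 <= Z) by (unfold Z; nra).
  assert (HK : 0 <= K) by (unfold K; nra).
  assert (HP2 : 16*(P*P) <= b*b) by nra.
  assert (HPb : -(b/4) <= P <= b/4).
  { assert (Hb0 : 0 < b/4) by lra.
    destruct (Rle_dec P (b/4)); destruct (Rle_dec (-(b/4)) P); split; try assumption; nra. }
  set (B := 2*P + b).
  assert (HB : b/2 <= B) by (unfold B; lra).
  assert (Hdisc : 0 <= B*B - 4*K*Z) by nra.
  set (S := sqrt (B*B - 4*K*Z)).
  assert (HS : S*S = B*B - 4*K*Z) by (unfold S; apply sqrt_sqrt; lra).
  assert (HS0 : 0 <= S) by (unfold S; apply sqrt_pos).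
  set (rho := 2*Z/(B+S)).
  assert (Hr : rho*(B+S) = 2*Z) by (unfold rho; field; lra).
  assert (Hrho0 : 0 <= rho) by (unfold rho; apply Rmult_le_pos; [lra| left; apply Rinv_0_lt_compat; lra]).
  assert (Hq : K*rho*rho - B*rho + Z = 0).
  { assert (X : (K*rho*rho - B*rho + Z)*((B+S)*(B+S)) = 0).
    { replace ((K*rho*rho - B*rho + Z)*((B+S)*(B+S))) with
        (K*(rho*(B+S))*(rho*(B+S)) - B*(B+S)*(rho*(B+S)) + Z*((B+S)*(B+S))) by ring.
      rewrite Hr. nra. }
    apply Rmult_integral in X. destruct X as [X|X]; [exact X|nra]. }
  set (u1 := z1 - rho*e1). set (u2 := z2 - rho*e2).
  assert (Hu : u1*u1+u2*u2 = rho*b).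
  { assert (u1*u1+u2*u2 - rho*b = K*rho*rho - B*rho + Z) by (unfold u1,u2,K,B,P,Z,b; ring). lra. }
  exists ((u1*a1+u2*a2)/b, (u2*a1-u1*a2)/b); simpl.
  assert (Hn : (u1*a1+u2*a2)/b*((u1*a1+u2*a2)/b)+(u2*a1-u1*a2)/b*((u2*a1-u1*a2)/b) = rho).
  { replace ((u1*a1+u2*a2)/b*((u1*a1+u2*a2)/b)+(u2*a1-u1*a2)/b*((u2*a1-u1*a2)/b))
      with ((u1*u1+u2*u2)*b/(b*b)) by (unfold b; field; fold b; lra).
    rewrite Hu. field. lra. }
  rewrite Hn. f_equal; unfold u1, u2 in *; unfold b; field; fold b; lra.
Qed.

Lemma sqrt_lt_sq x d : 0 <= x -> sqrt x < d -> x < d*d.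
Proof. intros Hx Hs. pose proof (sqrt_sqrt x Hx). pose proof (sqrt_pos x). nra. Qed.

Lemma delta_lem (n q : R) (a C lam : Cplx) : 0 < n -> 0 <= q -> 0 < Re a*Re a+Im a*Im a ->
 exists d, 0 < d /\ forall w, Cmod (Csub w lam) < d -> exists e : Cplx,
   Cadd (Cmul e a) (Cmul (RtoC (Re e*Re e+Im e*Im e)) (Csub C (Cmul w (RtoC q))))
   = Cmul (RtoC n) (Csub w lam).
Proof.
  intros Hn Hq Hb.
  set (b := Re a*Re a+Im a*Im a) in *.
  destruct C as [c1 c2], lam as [l1 l2].
  set (M := 2*(c1*c1+c2*c2) + 4*(q*q)*(l1*l1+l2*l2+2)).
  assert (HM : 0 <= M) by (unfold M; nra).
  exists (b/(4*n*(M+1)+b)). split.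
  { apply Rdiv_lt_0_compat; nra. }
  intros w Hw. apply solve_eps; [exact Hb|].
  fold b.
  set (d := b/(4*n*(M+1)+b)) in *.
  assert (Hd1 : d*(4*n*(M+1)) <= b).
  { unfold d. apply (Rmult_le_reg_r (4*n*(M+1)+b)); [nra|].
    replace (b / (4 * n * (M + 1) + b) * (4 * n * (M + 1)) * (4 * n * (M + 1) + b))
      with (b * (4 * n * (M + 1))) by (field; nra). nra. }
  assert (Hd0 : 0 < d) by (unfold d; apply Rdiv_lt_0_compat; nra).
  assert (Hdle : d <= 1).
  { unfold d. apply (Rmult_le_reg_r (4*n*(M+1)+b)); [nra|].
    replace (b / (4 * n * (M + 1) + b) * (4 * n * (M + 1) + b)) with b by (field; nra). nra. }
  destruct w as [w1 w2]. cunf.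
  set (d1 := w1 + - l1) in *. set (d2 := w2 + - l2) in *.
  apply sqrt_lt_sq in Hw; [|nra].
  assert (Hw1 : w1 = l1 + d1) by (unfold d1; ring).
  assert (Hw2 : w2 = l2 + d2) by (unfold d2; ring).
  assert (Hdd : d1*d1+d2*d2 <= 1) by nra.
  set (K := (c1 + - (w1 * q - w2 * 0)) * (c1 + - (w1 * q - w2 * 0)) +
     (c2 + - (w1 * 0 + w2 * q)) * (c2 + - (w1 * 0 + w2 * q))).
  assert (HK : K <= M).
  { assert (K <= 2*(c1*c1+c2*c2) + 2*(q*q)*(w1*w1+w2*w2)).
    { unfold K. pose proof (pow2_ge_0 (c1 + w1*q)). pose proof (pow2_ge_0 (c2 + w2*q)). nra. }
    assert (w1*w1+w2*w2 <= 2*(l1*l1+l2*l2) + 2).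
    { rewrite Hw1, Hw2. pose proof (pow2_ge_0 (l1 - d1)). pose proof (pow2_ge_0 (l2 - d2)). nra. }
    unfold M. assert (0 <= q*q) by nra. nra. }
  assert (HK0 : 0 <= K) by (unfold K; apply Rplus_le_le_0_compat; apply Rle_0_sqr).
  set (Z := (n * d1 - 0 * d2) * (n * d1 - 0 * d2) + (n * d2 + 0 * d1) * (n * d2 + 0 * d1)).
  assert (HZ : Z <= n*n*(d*d)) by (unfold Z; nra).
  assert (HZ0 : 0 <= Z) by (unfold Z; apply Rplus_le_le_0_compat; apply Rle_0_sqr).
  assert (Z*K*16 <= n*n*(d*d)*M*16) by (apply Rmult_le_compat_r; [lra|]; apply Rmult_le_compat; nra).
  assert (n*n*(d*d)*M*16 <= b*b).
  { assert (M <= (M+1)*(M+1)) by nra.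
    assert (0 <= d*(4*n*(M+1))) by (apply Rmult_le_pos; [lra|]; apply Rmult_le_pos; lra).
    assert ((d*(4*n*(M+1)))*(d*(4*n*(M+1))) <= b*b) by (apply Rmult_le_compat; lra).
    assert (n*n*(d*d)*M*16 <= n*n*(d*d)*((M+1)*(M+1))*16).
    { assert (0 <= n*n*(d*d)) by nra. nra. }
    nra. }
  lra.
Qed.

Section HS.
Context (H : ComplexHilbertSpace).

Lemma hadd_cancel (s : H) : s = hadd s s -> s = hzero.
Proof.
  intro E. rewrite <- (hadd_opp H s). rewrite E at 2.
  rewrite <- hadd_assoc, hadd_opp, hadd_0. reflexivity.
Qed.

Lemma hscal0 (x : H) : hscal C0 x = hzero.
Proof.
  apply hadd_cancel. rewrite <- hscal_adds. f_equal. cring.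
Qed.

Lemma hinner0l (y : H) : hinner hzero y = C0.
Proof.
  rewrite <- (hscal0 y), hinner_scal. cring.
Qed.

Lemma hinner_add_r (x y z : H) : hinner x (hadd y z) = Cadd (hinner x y) (hinner x z).
Proof.
  rewrite (hinner_conj H (hadd y z) x), hinner_add, (hinner_conj H y x), (hinner_conj H z x).
  generalize (hinner y x) (hinner z x). intros. cring.
Qed.

Lemma hinner_scal_r (a : Cplx) (x y : H) : hinner x (hscal a y) = Cmul (Cconj a) (hinner x y).
Proof.
  rewrite (hinner_conj H (hscal a y) x), hinner_scal, (hinner_conj H y x).
  generalize (hinner y x). intros. cring.
Qed.

Lemma hopp_unique (y u : H) : hadd y u = hzero -> u = hopp y.
Proof.
  intro E. rewrite <- (hadd_0 H u). rewrite <- (hadd_opp H y).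
  rewrite hadd_assoc, (hadd_comm H u y), E, hadd_comm, hadd_0. reflexivity.
Qed.

Lemma hopp_scal (y : H) : hopp y = hscal (Copp Defs.C1) y.
Proof.
  symmetry. apply hopp_unique. rewrite <- (hscal_1 H y) at 1.
  rewrite <- hscal_adds. replace (Cadd Defs.C1 (Copp Defs.C1)) with C0 by cring. apply hscal0.
Qed.

Lemma hsub_zero (a b : H) : hadd a (hopp b) = hzero -> a = b.
Proof.
  intro E. rewrite <- (hadd_0 H a). rewrite <- (hadd_opp H b).
  rewrite (hadd_comm H b), hadd_assoc, E, hadd_comm, hadd_0. reflexivity.
Qed.

Lemma expand (P : H -> Prop) (S : H -> H -> Cplx)
 (Sal : forall x y z, P x -> P y -> P z -> S (hadd x y) z = Cadd (S x z) (S y z))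
 (Ssl : forall a x z, P x -> P z -> S (hscal a x) z = Cmul a (S x z))
 (Sar : forall x y z, P x -> P y -> P z -> S z (hadd x y) = Cadd (S z x) (S z y))
 (Ssr : forall a x z, P x -> P z -> S z (hscal a x) = Cmul (Cconj a) (S z x))
 (Pa : forall x y, P x -> P y -> P (hadd x y)) (Ps : forall a x, P x -> P (hscal a x))
 x y e : P x -> P y ->
 S (hadd x (hscal e y)) (hadd x (hscal e y)) =
 Cadd (Cadd (S x x) (Cmul e (S y x))) (Cadd (Cmul (Cconj e) (S x y)) (Cmul (Cmul e (Cconj e)) (S y y))).
Proof.
  intros Px Py. assert (Pe : P (hscal e y)) by auto.
  rewrite Sal by auto. rewrite !Sar by auto. rewrite !Ssl by auto. rewrite !Ssr by auto.
  generalize (S x x) (S y x) (S x y) (S y y). intros. cring.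
Qed.

Lemma expand_inner (x y : H) (e : Cplx) :
 hinner (hadd x (hscal e y)) (hadd x (hscal e y)) =
 Cadd (Cadd (hinner x x) (Cmul e (hinner y x))) (Cadd (Cmul (Cconj e) (hinner x y)) (Cmul (Cmul e (Cconj e)) (hinner y y))).
Proof.
  apply (expand (fun _ => True)); intros; auto.
  - apply hinner_add. - apply hinner_scal. - apply hinner_add_r. - apply hinner_scal_r.
Qed.

End HS.

Lemma Cinj (a b c d : R) : (a, b) = (c, d) -> a = c /\ b = d.
Proof. intro E. injection E. auto. Qed.

Lemma core (H : ComplexHilbertSpace) (D : H -> Prop) (B : H -> H -> Cplx) (lam : Cplx)
 (Da : forall x y, D x -> D y -> D (hadd x y)) (Ds : forall a x, D x -> D (hscal a x))
 (Bal : forall x y z, D x -> D y -> D z -> B (hadd x y) z = Cadd (B x z) (B y z))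
 (Bsl : forall a x z, D x -> D z -> B (hscal a x) z = Cmul a (B x z))
 (Bar : forall x y z, D x -> D y -> D z -> B z (hadd x y) = Cadd (B z x) (B z y))
 (Bsr : forall a x z, D x -> D z -> B z (hscal a x) = Cmul (Cconj a) (B z x))
 (Hbd : forall eps, 0 < eps -> exists w,
      ~ (exists h, D h /\ hnorm H h = 1 /\ B h h = w) /\ Cmod (Csub w lam) < eps)
 (f : H) (Df : D f) (Hf : forall h, D h -> B f h = Cmul lam (hinner f h)) :
 forall g, D g -> B g f = Cmul lam (hinner g f).
Proof.
  intros g Dg.
  destruct (classic (f = hzero)) as [Hf0|Hf0].
  { subst f. rewrite <- (hscal0 H hzero). rewrite Bsr, hinner_scal_r by auto.
    generalize (B g hzero) (hinner g hzero). intros. cring. }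
  destruct (hinner_pos H f) as [Hfi Hfr].
  set (n := Re (hinner f f)) in *.
  assert (Hff : hinner f f = RtoC n) by (apply Ceq; [reflexivity| exact Hfi]).
  assert (Hn : 0 < n).
  { destruct Hfr as [Hfr|Hfr]; [exact Hfr|]. exfalso. apply Hf0. apply hinner_def.
    rewrite Hff, <- Hfr. reflexivity. }
  set (p := hinner g f).
  set (k := Cmul p (RtoC (/n))).
  set (g' := hadd g (hscal (Copp k) f)).
  assert (Dg' : D g') by (unfold g'; auto).
  assert (Hg'f : hinner g' f = C0).
  { unfold g'. rewrite hinner_add, hinner_scal, Hff. fold p. unfold k.
    destruct p as [p1 p2]. apply Ceq; cunf; field; lra. }
  assert (Hfg' : hinner f g' = C0).
  { rewrite hinner_conj, Hg'f. cring. }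
  set (a := B g' f).
  assert (Ha : a = Cadd (B g f) (Cmul (Copp k) (Cmul lam (RtoC n)))).
  { unfold a, g'. rewrite Bal, Bsl, Hf, Hff by auto. reflexivity. }
  assert (Ha0 : a = C0).
  { apply NNPP. intro Hne.
    assert (Hb : 0 < Re a * Re a + Im a * Im a).
    { destruct a as [a1 a2]. cunf.
      destruct (Req_dec a1 0); destruct (Req_dec a2 0); [subst; exfalso; apply Hne; reflexivity| nra..]. }
    destruct (hinner_pos H g') as [Hgi Hgr].
    set (q := Re (hinner g' g')) in *.
    assert (Hgg : hinner g' g' = RtoC q) by (apply Ceq; [reflexivity| exact Hgi]).
    set (C := B g' g').
    destruct (delta_lem n q a C lam Hn Hgr Hb) as [d [Hd Hdw]].
    destruct (Hbd d Hd) as [w [Hnw Hwd]].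
    destruct (Hdw w Hwd) as [e He].
    apply Hnw.
    set (rho := Re e * Re e + Im e * Im e) in *.
    set (h := hadd f (hscal e g')).
    assert (Dh : D h) by (unfold h; auto).
    set (N := n + rho * q).
    assert (HN : 0 < N) by (unfold N, rho; nra).
    assert (Hhh : hinner h h = RtoC N).
    { unfold h. rewrite expand_inner, Hff, Hg'f, Hfg', Hgg.
      unfold N, rho. cring. }
    assert (HBhh : B h h = Cmul w (RtoC N)).
    { unfold h. rewrite (expand H D B Bal Bsl Bar Bsr Da Ds) by auto.
      rewrite (Hf f), (Hf g'), Hff, Hfg' by auto. fold a. fold C.
      destruct e as [e1 e2], a as [a1 a2], C as [c1 c2], w as [w1 w2], lam as [l1 l2].
      unfold N, rho in *. cunf. apply Cinj in He. destruct He as [He1 He2].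
      f_equal; nra. }
    set (s := / sqrt N).
    assert (Hs : s * s * N = 1).
    { unfold s. pose proof (sqrt_sqrt N (Rlt_le _ _ HN)). pose proof (sqrt_lt_R0 N HN).
      replace (/ sqrt N * / sqrt N * N) with (N / (sqrt N * sqrt N)) by (field; lra).
      rewrite H0. field. lra. }
    exists (hscal (RtoC s) h). split; [auto|]. split.
    - unfold hnorm. rewrite hinner_scal, hinner_scal_r, Hhh.
      replace (Re (Cmul (RtoC s) (Cmul (Cconj (RtoC s)) (RtoC N)))) with (s*s*N) by (cunf; ring).
      rewrite Hs. apply sqrt_1.
    - rewrite Bsl, Bsr, HBhh by auto. destruct w as [w1 w2]. apply Ceq; cunf.
      + transitivity (w1*(s*s*N)); [ring| rewrite Hs; ring].
      + transitivity (w2*(s*s*N)); [ring| rewrite Hs; ring]. }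
  assert (E : B g f = Cadd a (Cmul k (Cmul lam (RtoC n)))).
  { rewrite Ha. generalize (B g f). intros. cring. }
  rewrite E, Ha0. unfold k. fold p. destruct p as [p1 p2], lam as [l1 l2].
  apply Ceq; cunf; field; lra.
Qed.

Theorem mainTheorem1 (H : ComplexHilbertSpace) (D : H -> Prop) (Z : H -> H) (lam : Cplx)
  (Hlin : is_linear_operator H D Z)
  (Hdense : densely_defined H D)
  (Hclosed : closed_operator H D Z)
  (Hdom : forall f, D f -> adjoint_domain H D Z f)
  (Hbd : boundary_eigenvalue H D Z lam) :
  (forall f, ker_Z H D Z lam f -> ker_Zadj H D Z lam f) /\
  ((forall g, adjoint_domain H D Z g -> D g) ->
     forall f, ker_Z H D Z lam f <-> ker_Zadj H D Z lam f).
Proof.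
  destruct Hlin as [HD0 [Hadd Hsc]].
  assert (Da : forall x y, D x -> D y -> D (hadd x y)) by (intros; apply Hadd; auto).
  assert (Ds : forall a x, D x -> D (hscal a x)) by (intros; apply Hsc; auto).
  destruct Hbd as [_ Hbd].
  assert (Hbd2 : forall eps, 0 < eps -> exists w,
      ~ (exists h, D h /\ hnorm H h = 1 /\ hinner (Z h) h = w) /\ Cmod (Csub w lam) < eps).
  { intros eps He. destruct (Hbd eps He) as [_ [w [Hw1 Hw2]]]. exists w. split; auto. }
  assert (Claim1 : forall f, ker_Z H D Z lam f -> ker_Zadj H D Z lam f).
  { intros f [Df Zf] g Dg.
    rewrite hinner_scal_r.
    rewrite (core H D (fun x y => hinner (Z x) y) lam Da Ds); auto.
    - f_equal. destruct lam; apply Ceq; cunf; ring.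
    - intros x y z Dx Dy Dz. destruct (Hadd x y Dx Dy) as [_ ->]. apply hinner_add.
    - intros a x z Dx Dz. destruct (Hsc a x Dx) as [_ ->]. apply hinner_scal.
    - intros x y z Dx Dy Dz. apply hinner_add_r.
    - intros a x z Dx Dz. apply hinner_scal_r.
    - intros h Dh. rewrite Zf. apply hinner_scal. }
  split; [exact Claim1|].
  intros Hdd f. split; [apply Claim1|].
  intro Hk.
  assert (Df : D f) by (apply Hdd; exists (hscal (Cconj lam) f); exact Hk).
  split; [exact Df|].
  set (B := fun x y => Cconj (hinner (Z y) x)).
  assert (HB : forall g, D g -> B g f = Cmul (Cconj lam) (hinner g f)).
  { apply (core H D B (Cconj lam) Da Ds); auto.
    - intros x y z Dx Dy Dz. unfold B. rewrite hinner_add_r. generalize (hinner (Z z) x) (hinner (Z z) y).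
      intros. cring.
    - intros a x z Dx Dz. unfold B. rewrite hinner_scal_r. generalize (hinner (Z z) x). intros. cring.
    - intros x y z Dx Dy Dz. unfold B. destruct (Hadd x y Dx Dy) as [_ ->]. rewrite hinner_add.
      generalize (hinner (Z x) z) (hinner (Z y) z). intros. cring.
    - intros a x z Dx Dz. unfold B. destruct (Hsc a x Dx) as [_ ->]. rewrite hinner_scal.
      generalize (hinner (Z x) z). intros. cring.
    - intros eps He. destruct (Hbd2 eps He) as [w [Hw1 Hw2]]. exists (Cconj w). split.
      + intros [h [Dh [Hh1 Hh2]]]. apply Hw1. exists h. split; auto. split; auto.
        unfold B in Hh2.
        transitivity (Cconj (Cconj (hinner (Z h) h))); [generalize (hinner (Z h) h); intros; cring|].
        rewrite Hh2. destruct w; cring.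
      + destruct w, lam. cunf. replace ((- r0 + - - r2) * (- r0 + - - r2)) with ((r0 + - r2) * (r0 + - r2)) by ring. exact Hw2.
    - intros h Dh. unfold B. rewrite (Hk h Dh), hinner_scal_r, (hinner_conj H h f).
      generalize (hinner h f). intros. cring. }
  set (v := hadd (Z f) (hopp (hscal lam f))).
  assert (Hv : forall g, D g -> hinner v g = C0).
  { intros g Dg. pose proof (HB g Dg) as E. unfold B in E.
    unfold v. rewrite hopp_scal, hinner_add, hinner_scal, hinner_scal.
    assert (E' : hinner (Z f) g = Cmul lam (hinner f g)).
    { rewrite (hinner_conj H g f).
      replace (hinner (Z f) g) with (Cconj (Cconj (hinner (Z f) g))) by (generalize (hinner (Z f) g); intros; cring).
      rewrite E. generalize (hinner g f). intros. cring. }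
    rewrite E'. generalize (hinner f g). intros. cring. }
  apply hsub_zero. fold v.
  destruct (hinner_pos H v) as [Hvi Hvr].
  destruct Hvr as [Hvr|Hvr].
  - exfalso.
    destruct (Hdense v (sqrt (Re (hinner v v))) (sqrt_lt_R0 _ Hvr)) as [y [Dy Hy]].
    unfold hnorm, hsub in Hy. rewrite hopp_scal, expand_inner in Hy. fold v in Hy.
    rewrite (hinner_conj H v y), (Hv y Dy) in Hy.
    destruct (hinner_pos H y) as [_ Hyr].
    apply sqrt_lt_0_alt in Hy.
    revert Hy Hyr. generalize (hinner v v) (hinner y y). intros c1 c2 Hy Hyr.
    destruct c1, c2. cunf. nra.
  - apply hinner_def. apply Ceq; [symmetry; exact Hvr| exact Hvi].
Qed.
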